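(* Let $F$ be an infinite field, $G$ a group, and $(g_1,\dots,g_n)\in G^n$ with pairwise distinct entries. Give $M_n(F)$ the elementary $G$-grading induced by $(g_1,\dots,g_n)$ and let $B$ be a subalgebra of $M_n(F)$ spanned by a set of matrix units, with the induced grading. If a monomial $x_{h_1}^{(i_1)}\cdots x_{h_p}^{(i_p)}$ in $F\langle X|G\rangle$ is a graded identity of $B$, then it lies in the $T_G$-ideal generated by some monomial in $T_G(B)$ of length at most $2n-1$.
   Context: The elementary grading on $M_n(F)$ induced by $(g_1,\dots,g_n)$: the homogeneous component of degree $g$ is spanned by the matrix units $e_{ij}$ with $g_i^{-1}g_j=g$; $B$ has the grading $B_g=B\cap M_n(F)_g$. $F\langle X|G\rangle$ is the free associative algebra on disjoint countable sets of variables $X_g=\{x_g^{(1)},x_g^{(2)},\dots\}$, $g\in G$, with $x_g^{(i)}$ of degree $g$. $T_G(B)$ is the set of graded polynomial identities of $B$ (polynomials vanishing whenever each variable $x_g^{(i)}$ is replaced by an element of $B_g$); a $T_G$-ideal is an ideal invariant under all degree-preserving endomorphisms of $F\langle X|G\rangle$. *)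

(* Defs.v *)
From HB Require Import structures.
From mathcomp Require Import all_boot all_algebra finmap.
From mathcomp Require Import monalg.

Set Implicit Arguments.
Unset Strict Implicit.
Unset Printing Implicit Defensive.

Import GRing.Theory.
Local Open Scope ring_scope.

(* Graded variables x_g^(i) are represented by pairs (g, i) : G * nat. *)
Definition gvar (G : groupType) := (G * nat)%type.

Definition gword (G : groupType) := {fmonom gvar G}.

Definition FreeAlg (F : fieldType) (G : groupType) := {malg F[gword G]}.

Definition monomial (F : fieldType) (G : groupType) (w : gword G) : FreeAlg F G :=
  << w >>.

Definition word_deg (G : groupType) (w : gword G) : G :=
  foldr (fun v acc => (v.1 * acc)%g) 1%g (w : seq (gvar G)).

(* Homogeneous elements of degree g of F<X|G> (0 is homogeneous of any degree). *)
Definition homogeneous (F : fieldType) (G : groupType) (p : FreeAlg F G) (g : G) :=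
  forall w : gword G, w \in msupp p -> word_deg w = g.

Definition graded_endo (F : fieldType) (G : groupType) (phi : FreeAlg F G -> FreeAlg F G) :=
  [/\ forall (a : F) (p q : FreeAlg F G), phi (a *: p + q) = a *: phi p + phi q,
      forall p q : FreeAlg F G, phi (p * q) = phi p * phi q,
      phi 1 = 1 &
      forall (p : FreeAlg F G) (g : G), homogeneous p g -> homogeneous (phi p) g].

Definition is_ideal (F : fieldType) (G : groupType) (I : FreeAlg F G -> Prop) :=
  [/\ I 0,
      forall p q, I p -> I q -> I (p + q),
      forall (a : F) p, I p -> I (a *: p) &
      forall p q r, I q -> I (p * q * r)].

Definition is_TG_ideal (F : fieldType) (G : groupType) (I : FreeAlg F G -> Prop) :=
  is_ideal I /\ forall phi, graded_endo phi -> forall p, I p -> I (phi p).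

Definition in_TG_ideal_gen (F : fieldType) (G : groupType)
    (S : FreeAlg F G -> Prop) (p : FreeAlg F G) :=
  forall I, is_TG_ideal I -> (forall q, S q -> I q) -> I p.

Definition elem_homog (F : fieldType) (G : groupType) (n : nat) (gs : 'I_n -> G)
    (h : G) (A : 'M[F]_n) :=
  forall i j, A i j != 0 -> ((gs i)^-1 * gs j)%g = h.

Definition mu_span (F : fieldType) (n : nat) (S : {set 'I_n * 'I_n}) (A : 'M[F]_n) :=
  forall i j, A i j != 0 -> (i, j) \in S.

(* The span of the matrix units indexed by S is a subalgebra
   (closed under multiplication: e_ij e_jk = e_ik). *)
Definition mu_closed (n : nat) (S : {set 'I_n * 'I_n}) :=
  forall i j k, (i, j) \in S -> (j, k) \in S -> (i, k) \in S.

Definition eval_mx (F : fieldType) (G : groupType) (n : nat)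
    (s : gvar G -> 'M[F]_n) (p : FreeAlg F G) : 'M[F]_n :=
  \sum_(w <- msupp p) p@_w *: \prod_(v <- (w : seq (gvar G))) s v.

(* p is a graded polynomial identity of B = span of e_ij, (i,j) in S, with the
   grading B_h = B \cap M_n(F)_h. *)
Definition graded_identity (F : fieldType) (G : groupType) (n : nat)
    (gs : 'I_n -> G) (S : {set 'I_n * 'I_n}) (p : FreeAlg F G) :=
  forall s : gvar G -> 'M[F]_n,
    (forall v : gvar G, mu_span S (s v) /\ elem_homog gs v.1 (s v)) ->
    eval_mx s p = 0.

Definition infinite_field (F : fieldType) := forall s : seq F, exists x : F, x \notin s.

(* Main.v *)
Require Import Defs.
From HB Require Import structures.
From mathcomp Require Import all_boot all_algebra finmap.
From mathcomp Require Import monalg.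
From mathcomp Require Import zify.

Set Implicit Arguments.
Unset Strict Implicit.
Unset Printing Implicit Defensive.
Import GRing.Theory.
Local Open Scope ring_scope.

Section Walks.
Variables (G : groupType) (n : nat) (gs : 'I_n -> G) (S : {set 'I_n * 'I_n}).
Hypothesis gs_inj : injective gs.
Hypothesis Scl : mu_closed S.

Definition wdeg (s : seq (gvar G)) : G := foldr (fun v acc => (v.1 * acc)%g) 1%g s.

Lemma wdeg_cat s t : wdeg (s ++ t) = (wdeg s * wdeg t)%g.
Proof. by elim: s => [|v s IH] /=; rewrite ?mul1g // IH mulgA. Qed.

Definition step (d : G) (i : 'I_n) : option 'I_n :=
  [pick j | ((i, j) \in S) && (((gs i)^-1 * gs j)%g == d)].

Lemma stepP d i j : step d i = Some j -> (i, j) \in S /\ ((gs i)^-1 * gs j)%g = d.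
Proof.
rewrite /step; case: pickP => // k /andP [H1 /eqP H2] [<-]; by [].
Qed.

Lemma step_uniq d i j : (i, j) \in S -> ((gs i)^-1 * gs j)%g = d -> step d i = Some j.
Proof.
move=> H1 H2; rewrite /step; case: pickP => [k /andP [Hk /eqP Ek]|].
  congr Some; apply: gs_inj; apply: (mulgI (gs i)^-1)%g; by rewrite Ek H2.
by move/(_ j); rewrite H1 H2 eqxx.
Qed.

Lemma step_deg d i j : step d i = Some j -> gs j = (gs i * d)%g.
Proof. by move/stepP => [_ <-]; rewrite mulVKg. Qed.

Fixpoint walk (s : seq (gvar G)) (i : 'I_n) : option 'I_n :=
  match s with
  | [::] => Some i
  | v :: s' => if step v.1 i is Some j then walk s' j else None
  end.

Lemma walk_cat s t i : walk (s ++ t) i = obind (walk t) (walk s i).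
Proof.
elim: s i => [|v s IH] i //=; case: (step v.1 i) => //.
Qed.

Lemma walk_deg s i j : walk s i = Some j -> gs j = (gs i * wdeg s)%g.
Proof.
elim: s i => [|v s IH] i /=; first by case=> ->; rewrite mulg1.
case E: (step v.1 i) => [k|] // /IH ->; by rewrite (step_deg E) mulgA.
Qed.

Lemma walk_inj s i i' j : walk s i = Some j -> walk s i' = Some j -> i = i'.
Proof.
move=> /walk_deg H1 /walk_deg H2; apply: gs_inj; apply: (mulIg (wdeg s)).
by rewrite -H1 -H2.
Qed.

Lemma walkS s i j : s != [::] -> walk s i = Some j -> (i, j) \in S.
Proof.
elim: s i => [|v s IH] i //= _.
case E: (step v.1 i) => [k|] // Hw.
have [Sik _] := stepP E.
case: s IH Hw => [|v' s'] IH Hw.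
  by case: Hw => <-.
by apply: (Scl Sik); apply: (IH k).
Qed.

Lemma walk_coarse s i j : s != [::] -> walk s i = Some j -> step (wdeg s) i = Some j.
Proof.
move=> ne Hw; apply: step_uniq; first exact: walkS Hw.
by rewrite (walk_deg Hw) mulKg.
Qed.

Fixpoint cwalk (bl : seq (seq (gvar G))) (i : 'I_n) : option 'I_n :=
  match bl with
  | [::] => Some i
  | b :: bl' => if step (wdeg b) i is Some j then cwalk bl' j else None
  end.

Lemma cwalk_walk (bl : seq (seq (gvar G))) (ls : seq (gvar G)) :
  map fst ls = map wdeg bl -> walk ls =1 cwalk bl.
Proof.
elim: bl ls => [|b bl IH] [|v ls] //= [E1 E2] i.
by rewrite E1; case: (step _ i) => // j; apply: IH.
Qed.


Lemma comb u (A : {set 'I_n}) : A != set0 -> (forall i, i \in A -> walk u i = None) ->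
  exists x bl z, [/\ u = x ++ flatten bl ++ z, (size bl <= 2 * #|A| - 1)%N,
    (forall i, i \in A -> walk x i != None) &
    (forall i j, i \in A -> walk x i = Some j -> cwalk bl j = None)].
Proof.
elim: u A => [|v u IH] A /set0Pn [i0 Ai0] Hw.
  by move: (Hw i0 Ai0).
pose f i := odflt i (step v.1 i).
have finj : {in [set i in A | step v.1 i != None] &, injective f}.
  move=> i i'; rewrite !inE /f => /andP [_ Hi] /andP [_ Hi'].
  case Ei: (step v.1 i) Hi => [k|] // _; case Ei': (step v.1 i') Hi' => [k'|] // _ /= Ekk.
  by apply: (@walk_inj [:: v] _ _ k) => /=; rewrite ?Ei ?Ei' ?Ekk.
set A' := f @: [set i in A | step v.1 i != None].
have cardA' : #|A'| = #|[set i in A | step v.1 i != None]| by rewrite card_in_imset.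
have A'P j : j \in A' -> exists2 i, i \in A & step v.1 i = Some j.
  case/imsetP => i; rewrite inE /f => /andP [Ai]; case Ei: (step v.1 i) => [k|] // _ ->.
  by exists i.
have A'w j : j \in A' -> walk u j = None.
  by case/A'P => i Ai Ei; move: (Hw i Ai) => /=; rewrite Ei.
have inA' i j : i \in A -> step v.1 i = Some j -> j \in A'.
  move=> Ai Ei; apply/imsetP; exists i; first by rewrite inE Ai Ei.
  by rewrite /f Ei.
have [allS|] := boolP [forall i in A, step v.1 i != None].
  have A'ne : A' != set0.
    apply/set0Pn; move/forall_inP: allS => /(_ i0 Ai0).
    case Ei: (step v.1 i0) => [k|] // _; exists k; exact: inA' Ei.
  have cA : #|A'| = #|A|.
    rewrite cardA'; apply: eq_card => i; rewrite inE.
    case Ai: (i \in A) => //=; by move/forall_inP: allS => /(_ i Ai).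
  have [x [bl [z [Eu Hs Hx Hc]]]] := IH A' A'ne A'w.
  exists (v :: x), bl, z; split.
  - by rewrite Eu.
  - by rewrite -cA.
  - move=> i Ai /=; move/forall_inP: allS => /(_ i Ai).
    case Ei: (step v.1 i) => [k|] // _; apply: Hx; exact: inA' Ei.
  - move=> i j Ai /=; case Ei: (step v.1 i) => [k|] // Hxk.
    by apply: (Hc k) => //; exact: inA' Ei.
move/forall_inPn => [i1 Ai1]; rewrite negbK => /eqP Ei1.
have cA : (#|A'| < #|A|)%N.
  rewrite cardA'; apply: proper_card; apply/properP; split.
    by apply/subsetP => i; rewrite inE => /andP [].
  by exists i1 => //; rewrite inE Ei1 andbF.
have [A'0|A'ne] := eqVneq A' set0.
  exists [::], [:: [:: v]], u; split => //.
  - have : (0 < #|A|)%N by apply/card_gt0P; exists i0.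
    by rewrite /=; lia.
  - move=> i j Ai [<-] /=; rewrite mulg1.
    case Ei: (step v.1 i) => [k|] //.
    by have := inA' _ _ Ai Ei; rewrite A'0 inE.
have [x [bl [z [Eu Hs Hx Hc]]]] := IH A' A'ne A'w.
exists [::], ([:: v] :: (if x is [::] then bl else x :: bl)), z; split => //.
- rewrite Eu; clear Eu Hx Hc; case: x => [|v' x] /=; first by [].
  by rewrite -!catA.
- have pA' : (0 < #|A'|)%N by rewrite card_gt0.
  case: x {Eu Hx Hc} => /= [|v' x]; apply: leq_trans (_ : (size bl).+2 <= _)%N => //;
    rewrite -addn2; move: Hs cA pA'; clear; move: (size bl) #|A'| #|A| => a b c; lia.
- move=> i j Ai [<-] /=; rewrite mulg1.
  case Ei: (step v.1 i) => [k|] //.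
  have Ak := inA' _ _ Ai Ei.
  case: x Eu Hx Hc => [|v' x] Eu Hx Hc; first exact: (Hc k k).
  have := Hx k Ak; case Ew: (walk (v' :: x) k) => [j'|] // _.
  by rewrite /= (walk_coarse _ Ew) //; apply: (Hc k).
Qed.

End Walks.
Section Mx.
Variables (F : fieldType) (G : groupType) (n : nat) (gs : 'I_n -> G) (S : {set 'I_n * 'I_n}).
Hypothesis gs_inj : injective gs.

Lemma row_step (A : 'M[F]_n) d i : mu_span S A -> elem_homog gs d A ->
  row i A = if step gs S d i is Some j then A i j *: delta_mx 0 j else 0.
Proof.
move=> HS Hh; apply/rowP => k; rewrite !mxE.
case E: (step gs S d i) => [j|]; rewrite !mxE.
  case: (eqVneq k j) => [->|nkj]; first by rewrite eqxx mulr1.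
  rewrite mulr0; apply/eqP; apply: contraT => Hk.
  have := step_uniq gs_inj (HS _ _ Hk) (Hh _ _ Hk); rewrite E => -[Ejk].
  by rewrite Ejk eqxx in nkj.
apply/eqP; apply: contraT => Hk.
by have := step_uniq gs_inj (HS _ _ Hk) (Hh _ _ Hk); rewrite E.
Qed.

Lemma row_prod (s : gvar G -> 'M[F]_n) :
  (forall v : gvar G, mu_span S (s v) /\ elem_homog gs v.1 (s v)) ->
  forall u i, exists c : F, row i (\prod_(v <- u) s v) =
    if walk gs S u i is Some j then c *: delta_mx 0 j else 0.
Proof.
move=> Hs; elim=> [|v u IH] i.
  by exists 1; rewrite big_nil /= scale1r rowE mulmx1.
rewrite big_cons -mulmxE row_mul.
have [HS Hh] := Hs v; rewrite (row_step i HS Hh) /=.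
case: (step gs S v.1 i) => [j|]; last by exists 0; rewrite mul0mx.
have [c Hc] := IH j; exists (s v i j * c).
rewrite -scalemxAl -rowE Hc; case: (walk gs S u j) => [k|]; last by rewrite scaler0.
by rewrite scalerA.
Qed.

Definition s0 (v : gvar G) : 'M[F]_n :=
  \matrix_(i, j) (((i, j) \in S) && (((gs i)^-1 * gs j)%g == v.1))%:R.

Lemma s0P v : mu_span S (s0 v) /\ elem_homog gs v.1 (s0 v).
Proof.
split => i j; rewrite mxE; case/boolP: (((i, j) \in S) && _) => [/andP[H1 /eqP H2]|];
  by rewrite ?eqxx.
Qed.

Lemma row_prod0 u i : row i (\prod_(v <- u) s0 v) =
    if walk gs S u i is Some j then delta_mx 0 j else 0.
Proof.
elim: u i => [|v u IH] i.
  by rewrite big_nil /= rowE mulmx1.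
rewrite big_cons -mulmxE row_mul.
have [HS Hh] := s0P v; rewrite (row_step i HS Hh) /=.
case E: (step gs S v.1 i) => [j|]; last by rewrite mul0mx.
have [H1 H2] := stepP E.
rewrite mxE H1 H2 eqxx scale1r -rowE IH //.
Qed.

Lemma eval_monomial (s : gvar G -> 'M[F]_n) (w : gword G) :
  eval_mx s (monomial F w) = \prod_(v <- (w : seq (gvar G))) s v.
Proof.
by rewrite /eval_mx /monomial msuppU1 big_seq_fset1 mcoeffUU scale1r.
Qed.

Lemma identity_walk (w : gword G) : graded_identity gs S (monomial F w) ->
  forall i, walk gs S w i = None.
Proof.
move=> Hid i; have := Hid s0 s0P; rewrite eval_monomial => /(congr1 (row i)).
rewrite row_prod0 row0; case: (walk gs S w i) => [j|] // /rowP /(_ j).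
by rewrite !mxE !eqxx /= => /eqP; rewrite oner_eq0.
Qed.

Lemma walk_identity (m : gword G) : (forall i, walk gs S m i = None) ->
  graded_identity gs S (monomial F m).
Proof.
move=> Hm s Hs; rewrite eval_monomial; apply/row_matrixP => i.
have [c ->] := row_prod Hs m i; by rewrite Hm row0.
Qed.

End Mx.
Definition ext (G : groupType) (sig : gvar G -> seq (gvar G)) (w : gword G) : gword G :=
  FMonom (flatten (map sig (w : seq (gvar G)))).

Definition hmap (F : fieldType) (G : groupType) (sig : gvar G -> seq (gvar G))
  (w : gword G) : FreeAlg F G := << ext sig w >>.

Lemma mkU_mul (F : fieldType) (G : groupType) (a b : gword G) :
  (<< a >> : FreeAlg F G) * << b >> = << mmul a b >>.
Proof. by rewrite malgM_def fgmulUU mulr1. Qed.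

Lemma hmap_mm (F : fieldType) (G : groupType) (sig : gvar G -> seq (gvar G)) :
  mmorphism (hmap F sig).
Proof.
split.
  move=> x y; rewrite /hmap mkU_mul; congr << _ >>.
  by apply: val_inj; rewrite /= !fmM /= map_cat flatten_cat.
rewrite /hmap -mpolyC1E; congr << _ >>.
by apply: val_inj; rewrite /= fm1.
Qed.

HB.instance Definition _ (F : fieldType) (G : groupType) (sig : gvar G -> seq (gvar G)) :=
  monalg.isMultiplicative.Build (gword G) (FreeAlg F G) (hmap F sig) (hmap_mm F sig).

Definition phi (F : fieldType) (G : groupType) (sig : gvar G -> seq (gvar G))
  (p : FreeAlg F G) : FreeAlg F G := mmap (@malgC (gword G) F) (hmap F sig) p.

Lemma phiU (F : fieldType) (G : groupType) (sig : gvar G -> seq (gvar G)) (w : gword G) :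
  phi sig (monomial F w) = << ext sig w >>.
Proof. by rewrite /phi /monomial mmapU mul_malgC scale1r. Qed.

Lemma wdeg_ext (G : groupType) (sig : gvar G -> seq (gvar G)) :
  (forall v, wdeg (sig v) = v.1) -> forall w, word_deg (ext sig w) = word_deg w.
Proof.
move=> Hs [w].
have : wdeg (flatten (map sig w)) = wdeg w.
  elim: w => [|v w IH] //=.
  by rewrite wdeg_cat Hs IH.
by [].
Qed.

Lemma phi_endo (F : fieldType) (G : groupType) (sig : gvar G -> seq (gvar G)) :
  (forall v, wdeg (sig v) = v.1) -> graded_endo (phi (F := F) sig).
Proof.
move=> Hs; split.
- move=> a p q; rewrite /phi mmapD mmapZ mul_malgC //.
- move=> p q; apply: (commr_mmap_is_multiplicative _).1.
  move=> g m m'; rewrite /GRing.comm /= /hmap malgM_def fgmulUU malgM_def fgmulUU.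
  by rewrite mulr1 mul1r mul1m mulm1.
- exact: mmap1.
- move=> p g Hp; rewrite /phi mmapE big_seq.
  apply: (big_ind (fun q : FreeAlg F G => homogeneous q g)).
  + by move=> w; rewrite msupp0.
  + move=> x y Hx Hy w /(fsubsetP (msuppD_le _ _)); rewrite inE => /orP [].
      exact: Hx.
    exact: Hy.
  + move=> k Hk w; rewrite /hmap mul_malgC => /(fsubsetP (msuppZ_le _ _)).
    rewrite msuppU1 inE => /eqP ->; rewrite wdeg_ext //; exact: Hp.
Qed.
Theorem mainTheorem2 (F : fieldType) (G : groupType) (n : nat)
    (gs : 'I_n -> G) (S : {set 'I_n * 'I_n}) (w : gword G) :
  infinite_field F ->
  (0 < n)%N ->
  injective gs ->
  mu_closed S ->
  graded_identity gs S (monomial F w) ->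
  exists m : gword G,
    [/\ (size (m : seq (gvar G)) <= 2 * n - 1)%N,
        graded_identity gs S (monomial F m) &
        in_TG_ideal_gen (fun q => q = monomial F m) (monomial F w)].
Proof.
move=> _ n0 gsinj Scl Hid.
have Hw := identity_walk gsinj Hid.
have Tne : [set: 'I_n] != set0 by apply/set0Pn; exists (Ordinal n0).
have [x [bl [z [Ew Hs Hx Hc]]]] :=
  comb gsinj Scl (u := w) Tne (fun i _ => Hw i).
pose m : seq (gvar G) := [seq (wdeg (nth [::] bl k), k) | k <- iota 0 (size bl)].
pose sig (v : gvar G) : seq (gvar G) :=
  if (v.2 < size bl)%N && (v.1 == wdeg (nth [::] bl v.2)) then nth [::] bl v.2 else [:: v].
have Hsig v : wdeg (sig v) = v.1.
  rewrite /sig; case: ifP => [/andP [_ /eqP ->] //|_].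
  by rewrite /= mulg1.
have msig : map sig m = bl.
  rewrite -[RHS](mkseq_nth [::] bl) /mkseq -map_comp; apply/eq_in_map => k.
  rewrite mem_iota add0n => /andP [_ Hk] /=; by rewrite /sig /= Hk eqxx.
have mfst : map fst m = map (@wdeg G) bl.
  by rewrite -[in RHS](mkseq_nth [::] bl) /mkseq -!map_comp.
have allc j : cwalk gs S bl j = None.
  pose fx i := odflt i (walk gs S x i).
  have fxinj : injective fx.
    move=> i i'; rewrite /fx.
    move: (Hx i (in_setT _)) (Hx i' (in_setT _)).
    case E: (walk gs S x i) => [k|] //.
    case E': (walk gs S x i') => [k'|] //.
    move=> _ _ /= Ek; subst k'.
    exact: (walk_inj gsinj E E').
  have [g fg gf] := injF_bij fxinj.
  move: (Hx (g j) (in_setT _)) (gf j); rewrite /fx.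
  case E: (walk gs S x (g j)) => [k|] //= _ Ek; subst k.
  exact: (Hc (g j) j (in_setT _) E).
exists (FMonom m); split.
- by rewrite /= size_map size_iota -(card_ord n) -cardsT.
- apply: walk_identity => // i /=.
  by rewrite (cwalk_walk gs S mfst).
- move=> I [[_ _ _ Iid] Iphi] Im.
  have := Iphi _ (phi_endo F Hsig) _ (Im _ erefl); rewrite phiU.
  have -> : ext sig (FMonom m) = FMonom (flatten bl) by apply: val_inj; rewrite /= msig.
  move=> /(Iid (monomial F (FMonom x)) _ (monomial F (FMonom z))).
  rewrite /monomial !mkU_mul; congr (I << _ >>).
  apply: val_inj; rewrite /= !fmM /= Ew catA //.
Qed.
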